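(* Consider a Boolean control network $\mathbf{x}(t+1)=L\ltimes\mathbf{u}(t)\ltimes\mathbf{x}(t)$, $\mathbf{y}(t)=H\mathbf{x}(t)$, with $L\in\mathcal{L}_{N\times NM}$, $H\in\mathcal{L}_{P\times N}$, a periodic reference output trajectory of minimal period $T\ge1$, $\mathbf{y}_r(s+kT)=\delta_P^{i_s}$ ($s\in[1,T]$, $k\in\mathbb{Z}_+$), and an initial state $\mathbf{x}_0\in\mathcal{L}_N$ from which the periodic trajectory is trackable (i.e. there exists $\{\mathbf{u}(t)\}_{t\in\mathbb{Z}_+}\subset\mathcal{L}_M$ such that the state trajectory with $\mathbf{x}(0)=\mathbf{x}_0$ satisfies $H\mathbf{x}(t)=\mathbf{y}_r(t)$ for all $t\ge1$). Let $\mathbf{v}(t)=H^\top\mathbf{y}_r(t)$ for $t\in[1,T+1]$, $L_{tot}=L_1\vee\cdots\vee L_M$, $\boldsymbol{\alpha}(1)=\mathbf{v}(1)$, $\boldsymbol{\alpha}(t)=\mathbf{v}(t)\odot(L_{tot}\boldsymbol{\alpha}(t-1))$ for $t\in[2,T+1]$; $\boldsymbol{\beta}_1(T+1)=\boldsymbol{\alpha}(T+1)$, $\boldsymbol{\beta}_1(t)=\boldsymbol{\alpha}(t)\odot(L_{tot}^\top\boldsymbol{\beta}_1(t+1))$ for $t=T,\dots,1$; for $k\ge2$, $\boldsymbol{\beta}_k(T+1)=\boldsymbol{\beta}_{k-1}(T+1)\odot\boldsymbol{\beta}_{k-1}(1)$ and $\boldsymbol{\beta}_k(t)=\boldsymbol{\beta}_{k-1}(t)\odot(L_{tot}^\top\boldsymbol{\beta}_k(t+1))$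 for $t=T,\dots,1$. Let $\mathcal{X}_t^{(k)}=\{\delta_N^j:[\boldsymbol{\beta}_k(t)]_j\neq0\}$ and let $k^*$ be the smallest $k\ge1$ with $\mathcal{X}_{T+1}^{(k)}\subseteq\mathcal{X}_1^{(k)}$ or $\mathcal{X}_1^{(k)}=\emptyset$; write $\boldsymbol{\beta}=\boldsymbol{\beta}_{k^*}$. Define $$\mathcal{T}_{xu}(0)=\{(\delta_N^j,\delta_M^i):(L\ltimes\delta_M^i\ltimes\delta_N^j)\odot\boldsymbol{\beta}(1)\neq\mathbf{0}_N\},$$ $$\mathcal{T}_{xu}(t)=\{(\delta_N^j,\delta_M^i):[\boldsymbol{\beta}(t)]_j\neq0\text{ and }(L\ltimes\delta_M^i\ltimes\delta_N^j)\odot\boldsymbol{\beta}(t+1)\neq\mathbf{0}_N\},\quad t\in[1,T-1],$$ and $\mathcal{T}_u(t,\mathbf{x})=\{\mathbf{u}\in\mathcal{L}_M:(\mathbf{x},\mathbf{u})\in\mathcal{T}_{xu}(t)\}$. Then an input sequence $\{\mathbf{u}(t)\}_{t\in\mathbb{Z}_+}$ ensuring tracking of the periodic trajectory from $\mathbf{x}_0$ is obtained by the recursive procedure: for $t=0,1,2,\dots$, choose $\mathbf{u}_t\in\mathcal{T}_u(t\bmod T,\mathbf{x}_t)$ and set $\mathbf{x}_{t+1}=L\ltimes\mathbf{u}_t\ltimes\mathbf{x}_t$, with $\mathbf{u}(t)=\mathbf{u}_t$.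
   Context: $\delta_k^i$ is the $i$-th canonical vector of $\mathbb{R}^k$; $\mathcal{L}_k$ is the set of canonical vectors of $\mathbb{R}^k$; $\mathcal{L}_{k\times q}$ the set of $k\times q$ matrices whose columns lie in $\mathcal{L}_k$. $N=2^n$, $M=2^m$, $P=2^p$. $L=[L_1|\cdots|L_M]$ with $L_i\in\mathcal{L}_{N\times N}$, and $L\ltimes\delta_M^i\ltimes\mathbf{x}=L_i\mathbf{x}$. $\vee$ is entrywise Boolean OR, $\odot$ is the entrywise (Hadamard) product, matrix–vector products are ordinary (only zero/nonzero patterns matter), $[\mathbf{w}]_j$ is the $j$-th entry, $\mathbf{0}_N$ the zero vector, and $t\bmod T$ is the remainder of the Euclidean division of $t$ by $T$. *)

(* Defs.v *)
From mathcomp Require Import all_boot.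
Set Implicit Arguments.
Unset Strict Implicit.
Unset Printing Implicit Defensive.

(* Encoding:
   - a canonical vector delta_K^j is represented by its index j : 'I_K;
   - a logical matrix L in L_{N x NM}, L = [L_1|...|L_M], is represented by
     L : 'I_M -> 'I_N -> 'I_N with  L ⋉ delta_M^i ⋉ delta_N^j = delta_N^(L i j);
   - H in L_{P x N} is represented by H : 'I_N -> 'I_P, H delta_N^j = delta_P^(H j);
   - a nonnegative vector w in R^N (only its zero pattern matters) is
     represented by its support {set 'I_N}:  j \in w  <->  [w]_j <> 0. *)

Section BCN.
Variables (N M P : nat) (L : 'I_M -> 'I_N -> 'I_N) (H : 'I_N -> 'I_P).

Fixpoint traj (u : nat -> 'I_M) (x0 : 'I_N) (t : nat) : 'I_N :=
  match t with
  | 0 => x0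
  | t'.+1 => L (u t') (traj u x0 t')
  end.

Definition Ltot_mul (w : {set 'I_N}) : {set 'I_N} :=
  [set y : 'I_N | [exists i : 'I_M, [exists j in w, L i j == y]]].

Definition LtotT_mul (w : {set 'I_N}) : {set 'I_N} :=
  [set j : 'I_N | [exists i : 'I_M, L i j \in w]].

Section Ref.
Variables (T : nat) (yr : nat -> 'I_P).

Definition vv (t : nat) : {set 'I_N} := [set j : 'I_N | H j == yr t].

Fixpoint alpha (t : nat) : {set 'I_N} :=
  match t with
  | 0 => set0 (* unused *)
  | 1 => vv 1
  | t'.+1 => vv t :&: Ltot_mul (alpha t')
  end.

(* backward recursion: value at time T+1-d, given top = value at T+1,
   b(t) = base(t) ⊙ (L_tot^T b(t+1)) *)
Fixpoint back (top : {set 'I_N}) (base : nat -> {set 'I_N}) (d : nat)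
  : {set 'I_N} :=
  match d with
  | 0 => top
  | d'.+1 => base (T - d') :&: LtotT_mul (back top base d')
  end.

(* beta k t (meaningful for k >= 1 and t in [1, T+1]) *)
Fixpoint beta (k : nat) : nat -> {set 'I_N} :=
  match k with
  | 0 => alpha (* unused *)
  | 1 => fun t => back (alpha T.+1) alpha (T.+1 - t)
  | k'.+1 => let b := beta k' in
             fun t => back (b T.+1 :&: b 1) b (T.+1 - t)
  end.

Definition stop_cond (k : nat) : bool :=
  (beta k T.+1 \subset beta k 1) || (beta k 1 == set0).

Definition is_kstar (k : nat) : Prop :=
  0 < k /\ stop_cond k /\ (forall k', 0 < k' < k -> ~~ stop_cond k').

Definition Tu (ks : nat) (t : nat) (x : 'I_N) : {set 'I_M} :=
  [set i : 'I_M |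
     if t == 0 then L i x \in beta ks 1
     else (x \in beta ks t) && (L i x \in beta ks t.+1)].

End Ref.
End BCN.

(* Main.v *)
Require Import Defs.
From mathcomp Require Import all_boot zify.
Set Implicit Arguments.
Unset Strict Implicit.
Unset Printing Implicit Defensive.

Section Helpers.
Variables (N M P : nat) (L : 'I_M -> 'I_N -> 'I_N) (H : 'I_N -> 'I_P)
  (T : nat) (yr : nat -> 'I_P).

Local Notation beta := (beta L H T yr).
Local Notation alpha := (alpha L H yr).
Local Notation vv := (vv H yr).
Local Notation LtotT := (LtotT_mul L).

Definition bbase k := match k with | k'.+2 => beta k'.+1 | _ => alpha end.

Lemma beta_eq k t : 0 < k -> 0 < t <= T ->
  beta k t = bbase k t :&: LtotT (beta k t.+1).
Proof.
move=> k0 /andP[t0 tT].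
have E : T.+1 - t = (T - t).+1 by rewrite subSn.
have E2 : T - (T - t) = t by rewrite subKn.
case: k k0 => [|[|k]] //= _; rewrite E /= E2 subSS //.
Qed.

Lemma beta_top1 : beta 1 T.+1 = alpha T.+1.
Proof. by rewrite /= subnn. Qed.

Lemma beta_topS k : beta k.+2 T.+1 = beta k.+1 T.+1 :&: beta k.+1 1.
Proof. by rewrite /= subnn. Qed.

Lemma alpha_vv t : 0 < t -> alpha t \subset vv t.
Proof. case: t => [|[|t]] //= _; exact: subsetIl. Qed.

Lemma beta_vv k t : 0 < k -> 0 < t <= T -> beta k t \subset vv t.
Proof.
move=> k0 Ht; elim: k k0 => [|k IH] // _.
rewrite beta_eq //; apply: subset_trans (subsetIl _ _) _.
case: k IH => [|k] IH /=; first by apply: alpha_vv; case/andP: Ht.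
exact: IH.
Qed.

Lemma beta_pre k t : 0 < k -> 0 < t <= T -> beta k t \subset LtotT (beta k t.+1).
Proof. by move=> k0 Ht; rewrite beta_eq //; exact: subsetIr. Qed.

Hypothesis T0 : 0 < T.
Hypothesis Hper : forall t, 0 < t -> yr (t + T) = yr t.

Lemma yr_per j t : 0 < t -> yr (j * T + t) = yr t.
Proof.
move=> t0; elim: j => [|j IH]; first by rewrite mul0n add0n.
have -> : j.+1 * T + t = (j * T + t) + T by rewrite mulSn; lia.
by rewrite Hper ?IH //; lia.
Qed.

Variables (u : nat -> 'I_M) (x0 : 'I_N).
Hypothesis Htr : forall t, 0 < t -> H (traj L u x0 t) = yr t.
Local Notation xs := (traj L u x0).

Lemma alpha_traj j t : 0 < t -> xs (j * T + t) \in alpha t.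
Proof.
case: t => [|t] // _; elim: t => [|t IH].
  by rewrite /= inE (@Htr (j*T+1)) ?yr_per //; lia.
rewrite /= inE; apply/andP; split.
  by rewrite inE (@Htr (j*T+t.+2)) ?yr_per // addnS.
rewrite /Ltot_mul ?inE; apply/existsP; exists (u (j * T + t.+1)).
apply/existsP; exists (xs (j * T + t.+1)); rewrite IH /=; apply/eqP.
by rewrite [j * T + t.+2]addnS.
Qed.

Lemma beta_traj k j t : 0 < k -> 0 < t <= T.+1 -> xs (j * T + t) \in beta k t.
Proof.
case: k => [|k] // _; elim: k j t => [|k IHk] j t.
- suff: forall d t j, T.+1 - t = d -> 0 < t <= T.+1 -> xs (j * T + t) \in beta 1 t.
    by move=> S Ht; apply: (S _ t j erefl Ht).
  elim=> [|d IH] {}t {}j Hd Ht.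
    have -> : t = T.+1 by lia.
    by rewrite beta_top1 alpha_traj.
  rewrite beta_eq //; last by lia.
  rewrite inE alpha_traj /LtotT_mul ?inE; last by lia.
  apply/existsP; exists (u (j * T + t)).
  have -> : L (u (j * T + t)) (xs (j * T + t)) = xs (j * T + t.+1) by rewrite addnS.
  apply: IH; lia.
- suff: forall d t j, T.+1 - t = d -> 0 < t <= T.+1 -> xs (j * T + t) \in beta k.+2 t.
    by move=> S Ht; apply: (S _ t j erefl Ht).
  elim=> [|d IH] {}t {}j Hd Ht.
    have -> : t = T.+1 by lia.
    rewrite beta_topS inE IHk //=.
    have -> : j * T + T.+1 = j.+1 * T + 1 by rewrite mulSn; lia.
    by rewrite IHk //; lia.
  rewrite beta_eq //; last by lia.
  rewrite inE /= IHk /LtotT_mul ?inE; last by lia.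
  apply/existsP; exists (u (j * T + t)).
  have -> : L (u (j * T + t)) (xs (j * T + t)) = xs (j * T + t.+1) by rewrite addnS.
  apply: IH; lia.
Qed.

End Helpers.

Section Exist.
Variables (N M P : nat) (L : 'I_M -> 'I_N -> 'I_N) (H : 'I_N -> 'I_P)
  (T : nat) (yr : nat -> 'I_P).
Local Notation beta := (beta L H T yr).

Lemma card_properI (A B : {set 'I_N}) : ~~ (A \subset B) -> #|A :&: B| < #|A|.
Proof.
move=> nAB; apply: proper_card; rewrite properE subsetIl /=.
by rewrite subsetI subxx.
Qed.

Lemma stop_exists : exists k, 0 < k /\ stop_cond L H T yr k.
Proof.
have key : forall k, (exists k', 0 < k' <= k.+1 /\ stop_cond L H T yr k')
    \/ #|beta k.+2 T.+1| + k.+1 <= #|beta 1 T.+1|.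
  elim=> [|k IH].
    case S: (stop_cond L H T yr 1); first by left; exists 1.
    right; rewrite beta_topS addn1. apply: card_properI.
    by move: S; rewrite /stop_cond; case: (_ \subset _).
  case: IH => [[k' [Hk' Sk']]|IH]; first by left; exists k'; split => //; lia.
  case S: (stop_cond L H T yr k.+2); first by left; exists k.+2; rewrite leqnn S.
  right; have: #|beta k.+3 T.+1| < #|beta k.+2 T.+1|.
    rewrite beta_topS; apply: card_properI.
    by move: S; rewrite /stop_cond; case: (_ \subset _).
  lia.
case: (key N) => [[k' [Hk' Sk']]|C]; first by exists k'; split => //; lia.
have : #|beta 1 T.+1| <= N by rewrite -[X in _ <= X]card_ord max_card.
lia.
Qed.

Lemma kstar_exists : exists k, is_kstar L H T yr k.
Proof.
have Ex : exists k, (0 < k) && stop_cond L H T yr k.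
  by case: stop_exists => k [k0 S]; exists k; rewrite k0 S.
case: (ex_minnP Ex) => k /andP[k0 S] Hmin.
exists k; split => //; split => // k' /andP[k'0 k'k]; apply/negP => S'.
have := Hmin k'; rewrite k'0 S' => /(_ isT); lia.
Qed.
End Exist.

Theorem corollary2 (n m p : nat)
  (L : 'I_(2 ^ m) -> 'I_(2 ^ n) -> 'I_(2 ^ n))
  (H : 'I_(2 ^ n) -> 'I_(2 ^ p))
  (T : nat) (yr : nat -> 'I_(2 ^ p)) (x0 : 'I_(2 ^ n)) :
  (* periodic reference output of minimal period T >= 1 (indexed t >= 1) *)
  0 < T ->
  (forall t, 0 < t -> yr (t + T) = yr t) ->
  (forall T', 0 < T' < T -> ~ (forall t, 0 < t -> yr (t + T') = yr t)) ->
  (* trackability from x0 *)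
  (exists u : nat -> 'I_(2 ^ m),
      forall t, 0 < t -> H (traj L u x0 t) = yr t) ->
  (* k* exists, and for it the recursive procedure never gets stuck and
     every input sequence it produces ensures tracking *)
  (exists ks, is_kstar L H T yr ks) /\
  (forall ks, is_kstar L H T yr ks ->
     (forall (u : nat -> 'I_(2 ^ m)) (t : nat),
        (forall s, s < t -> u s \in Tu L H T yr ks (s %% T) (traj L u x0 s)) ->
        exists i, i \in Tu L H T yr ks (t %% T) (traj L u x0 t)) /\
     (forall u : nat -> 'I_(2 ^ m),
        (forall t, u t \in Tu L H T yr ks (t %% T) (traj L u x0 t)) ->
        forall t, 0 < t -> H (traj L u x0 t) = yr t)).
Proof.
move=> T0 Hper _ [us Hus]; split; first exact: kstar_exists.
move=> ks [k0 [Hstop _]].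
have b1 : traj L us x0 1 \in beta L H T yr ks 1.
  have := @beta_traj _ _ _ L H T yr T0 Hper us x0 Hus ks 0 1 k0.
  rewrite mul0n add0n; apply; lia.
have Htop : beta L H T yr ks T.+1 \subset beta L H T yr ks 1.
  move: Hstop; rewrite /stop_cond; case/orP => // /eqP E.
  by rewrite E in_set0 in b1.
have step : forall u s, u s \in Tu L H T yr ks (s %% T) (traj L u x0 s) ->
    traj L u x0 s.+1 \in beta L H T yr ks (s %% T).+1.
  move=> u s; rewrite inE; case: eqP => [->|_] //=; by case/andP.
have avail : forall x r, r < T -> x \in beta L H T yr ks r.+1 ->
    exists i, i \in Tu L H T yr ks (r.+1 %% T) x.
  move=> x r rT xb.
  have /subsetP/(_ x xb) := @beta_pre _ _ _ L H T yr ks r.+1 k0 rT.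
  rewrite /LtotT_mul inE => /existsP[i Hi]; exists i; rewrite inE.
  case: (ltngtP r.+1 T) => [lt|gt|E]; [by rewrite (modn_small lt) /= xb Hi| lia|].
  rewrite E modnn /=; apply: (subsetP Htop); by move: Hi; rewrite E.
split.
- move=> u [|s] Hu.
    by exists (us 0); rewrite mod0n inE eqxx.
  have -> : s.+1 %% T = (s %% T).+1 %% T by rewrite -addn1 -modnDml addn1.
  by apply: avail (step u s (Hu s (ltnSn s))); rewrite ltn_pmod.
- move=> u Hu [|s] // _.
  have := step u s (Hu s).
  move/(subsetP (@beta_vv _ _ _ L H T yr ks (s %% T).+1 k0 _)).
  rewrite inE ltn_pmod // => /(_ isT) /eqP ->.
  by rewrite {2}(divn_eq s T) -addnS yr_per.
Qed.
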